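(* Let $\mathcal{H},\mathcal{K}$ be complex Hilbert spaces and $(f_*,f^* ):(\mathsf{P}(\mathcal{H}),\mathsf{L}(\mathcal{H}),\bar e_{\mathcal{H}})\to(\mathsf{P}(\mathcal{K}),\mathsf{L}(\mathcal{K}),\bar e_{\mathcal{K}})$ a Chu morphism. Define $f^{\rightarrow}:\mathsf{L}(\mathcal{H})\to\mathsf{L}(\mathcal{K})$ by $f^{\rightarrow}(S)=\bigvee\{f_*([\psi]):\psi\in S,\psi\ne0\}$ (join in the lattice $\mathsf{L}(\mathcal{K})$). Then $f^{\rightarrow}$ is left adjoint to $f^*$: for all $S\in\mathsf{L}(\mathcal{H})$ and $T\in\mathsf{L}(\mathcal{K})$, $f^{\rightarrow}(S)\subseteq T$ if and only if $S\subseteq f^*(T)$.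
   Context: A Chu morphism $(X,A,e)\to(X',A',e')$ between Chu spaces over $[0,1]$ is a pair $(f_*:X\to X',f^*:A'\to A)$ with $e(x,f^*(a'))=e'(f_*(x),a')$ for all $x,a'$. For a complex Hilbert space $\mathcal{H}$: $\mathsf{L}(\mathcal{H})$ is the lattice of closed subspaces ordered by inclusion, $P_S$ the orthogonal projector onto $S$, $\mathsf{P}(\mathcal{H})$ the set of rays $[\psi]=\{\lambda\psi:\lambda\in\mathbb{C}\}$, $\psi\ne0$, and $\bar e_{\mathcal{H}}([\psi],S)=\|P_S\psi\|^2/\|\psi\|^2$. *)

(* Defs.v *)
From HB Require Import structures.
From mathcomp Require Import all_boot all_order all_algebra.
From mathcomp Require Import complex.
From mathcomp Require Import boolp classical_sets reals.
Set Implicit Arguments.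
Unset Strict Implicit.
Unset Printing Implicit Defensive.
Import Order.TTheory GRing.Theory Num.Theory.
Local Open Scope ring_scope.
Local Open Scope classical_set_scope.

Definition ipnorm (R : realType) (V : lmodType R[i]) (ip : V -> V -> R[i])
  (x : V) : R := Num.sqrt (@complex.Re R (ip x x)).

Record isHilbert (R : realType) (V : lmodType R[i]) (ip : V -> V -> R[i])
  : Prop := {
  ip_linl : forall (a : R[i]) (x y z : V), ip (a *: x + y) z = a * ip x z + ip y z;
  ip_csym : forall x y : V, ip y x = conjc (ip x y);
  ip_ge0 : forall x : V, 0 <= ip x x;
  ip_def : forall x : V, ip x x = 0 -> x = 0;
  ip_complete : forall u : nat -> V,
    (forall e : R, 0 < e -> exists N : nat, forall m n : nat,
        (N <= m)%N -> (N <= n)%N -> ipnorm ip (u m - u n) < e) ->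
    exists l : V, forall e : R, 0 < e -> exists N : nat, forall n : nat,
        (N <= n)%N -> ipnorm ip (u n - l) < e
}.

Record HilbertSpace (R : realType) := {
  hcarrier :> lmodType R[i];
  hip : hcarrier -> hcarrier -> R[i];
  hax : isHilbert hip
}.

Section Hilb.
Variables (R : realType) (H : HilbertSpace R).

Definition hnorm (x : H) : R := ipnorm (@hip R H) x.

Definition closed_subspace (S : set H) : Prop :=
  [/\ S 0,
      (forall (a : R[i]) (x y : H), S x -> S y -> S (a *: x + y)) &
      (forall (u : nat -> H) (l : H), (forall n, S (u n)) ->
         (forall e : R, 0 < e -> exists N : nat, forall n : nat,
             (N <= n)%N -> hnorm (u n - l) < e) -> S l)].

Definition LH := {S : set H | closed_subspace S}.

Definition ray (psi : H) : set H := [set a *: psi | a in [set: R[i]]].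

Definition PH := {r : set H | exists2 psi : H, psi != 0 & r = ray psi}.

(* orthogonal projection P_S psi: the (unique, for closed S) p in S with
   psi - p orthogonal to S *)
Definition proj (S : set H) (psi : H) : H :=
  xget 0 [set p | S p /\ forall s, S s -> hip (psi - p) s = 0].

(* a chosen nonzero representative of a ray (the value of ebar does not
   depend on the choice) *)
Definition rep (r : PH) : H := xget 0 [set x | sval r x /\ x != 0].

Definition ebar (r : PH) (S : LH) : R :=
  hnorm (proj (sval S) (rep r)) ^+ 2 / hnorm (rep r) ^+ 2.

Definition Ljoin (F : set (set H)) : set H :=
  [set x | forall T : set H, closed_subspace T ->
             (forall A, F A -> A `<=` T) -> T x].

End Hilb.

Definition chu_morphism (R : realType) (H K : HilbertSpace R)
  (fs : PH H -> PH K) (fp : LH K -> LH H) : Prop :=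
  forall (x : PH H) (a' : LH K), ebar x (fp a') = ebar (fs x) a'.

Definition fto (R : realType) (H K : HilbertSpace R)
  (fs : PH H -> PH K) (S : LH H) : set K :=
  Ljoin [set A : set K | exists (r : PH H) (psi : H),
          [/\ sval S psi, psi != 0, sval r = ray psi & A = sval (fs r)]].

(* Main.v *)
Require Import Defs.
From HB Require Import structures.
From mathcomp Require Import all_boot all_order all_algebra.
From mathcomp Require Import complex.
From mathcomp Require Import boolp classical_sets reals.
Set Implicit Arguments.
Unset Strict Implicit.
Unset Printing Implicit Defensive.
Import Order.TTheory GRing.Theory Num.Theory.
Local Open Scope classical_set_scope.

Section Aux.
Local Open Scope ring_scope.
Variables (R : realType) (H : HilbertSpace R).
Local Notation ip := (@hip R H).
Let ax := hax H.

Lemma ipD (x y z : H) : ip (x + y) z = ip x z + ip y z.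
Proof. by have := ip_linl ax 1 x y z; rewrite scale1r mul1r. Qed.

Lemma ip0l (z : H) : ip 0 z = 0.
Proof.
have := ipD 0 0 z; rewrite addr0 => /eqP.
by rewrite -subr_eq addrN eq_sym => /eqP.
Qed.

Lemma ipZ a (x z : H) : ip (a *: x) z = a * ip x z.
Proof. by have := ip_linl ax a x 0 z; rewrite addr0 ip0l addr0. Qed.

Lemma ipB (x y z : H) : ip (x - y) z = ip x z - ip y z.
Proof. by rewrite ipD -scaleN1r ipZ mulN1r. Qed.

Lemma ipDr (x y z : H) : ip x (y + z) = ip x y + ip x z.
Proof.
by rewrite (ip_csym ax (y + z) x) ipD (ip_csym ax x y) (ip_csym ax x z) -!rmorphD !conjcK.
Qed.

Lemma ip_real (x : H) : ip x x = (complex.Re (ip x x))%:C%C.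
Proof.
have := ip_ge0 ax x; move: (ip x x) => [a b]; rewrite lecE /= => /andP[/eqP -> _].
by [].
Qed.

Lemma Re_ge0 (x : H) : 0 <= complex.Re (ip x x).
Proof. by have := ip_ge0 ax x; rewrite lecE => /andP[_ ]. Qed.

Lemma hnorm2 (x : H) : hnorm x ^+ 2 = complex.Re (ip x x).
Proof. by rewrite /hnorm /ipnorm sqr_sqrtr // Re_ge0. Qed.

Lemma Re0_eq0 (x : H) : complex.Re (ip x x) = 0 -> x = 0.
Proof. by move=> h; apply: (ip_def ax); rewrite ip_real h. Qed.

Lemma ebar_core (S : set H) (cs : closed_subspace S) (psi : H) :
  psi != 0 ->
  (hnorm (proj S psi) ^+ 2 / hnorm psi ^+ 2 = 1 <-> S psi).
Proof.
move=> psi0; case: cs => S0 Sl _.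
have SB : forall x y, S x -> S y -> S (x - y).
  by move=> x y Sx Sy; rewrite -scaleN1r addrC; apply: Sl.
have Hn : hnorm psi ^+ 2 != 0.
  rewrite hnorm2; apply/eqP => /Re0_eq0 h; by rewrite h eqxx in psi0.
split.
- rewrite /proj; case: xgetP => [p _ [Sp orth]|_].
  + move=> E0; have E : hnorm p ^+ 2 = hnorm psi ^+ 2.
      by rewrite -[RHS]mul1r -E0 divfK.
    have ipp : ip psi psi = ip p p + ip (psi - p) (psi - p).
      have -> : ip psi psi = ip (p + (psi - p)) (p + (psi - p)).
        by rewrite addrC subrK.
      rewrite (ipD p (psi - p)) (ipDr p p (psi - p)) (ipDr (psi - p) p (psi - p)) (orth _ Sp).
      have -> : ip p (psi - p) = 0.
        by rewrite (ip_csym ax (psi - p) p) (orth _ Sp) rmorph0.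
      by rewrite addr0 add0r.
    move: E; rewrite !hnorm2 ipp raddfD /= => /eqP.
    rewrite -{1}[complex.Re (ip p p)]addr0 => /eqP /addrI /esym /Re0_eq0 /eqP.
    by rewrite subr_eq0 => /eqP ->.
  + rewrite /hnorm /ipnorm ip0l /= sqrtr0 expr0n /= mul0r => /esym /eqP.
    by rewrite oner_eq0.
- move=> Spsi.
  have -> : proj S psi = psi.
    apply: xget_unique; first by split => // s _; rewrite addrN ip0l.
    move=> y [Sy orth]; apply/eqP; rewrite eq_sym -subr_eq0; apply/eqP.
    apply: (ip_def ax); apply: orth; exact: SB.
  by rewrite divff.
Qed.

Lemma rep_prop (r : PH H) : sval r (rep r) /\ rep r != 0.
Proof.
rewrite /rep; apply: (@xgetPex _ 0 [set x | sval r x /\ x != 0]).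
case: (svalP r) => psi psi0 ->; exists psi; split => //.
by exists 1%R => //; rewrite scale1r.
Qed.

Lemma scl_closed (S : set H) : closed_subspace S ->
  forall a x, S x -> S (a *: x).
Proof. by case=> S0 Sl _ a x Sx; rewrite -[_ *: _]addr0; apply: Sl. Qed.

Lemma rep_sub (S : set H) (cs : closed_subspace S) (r : PH H) :
  S (rep r) <-> sval r `<=` S.
Proof.
split; last by move=> h; apply: h; case: (rep_prop r).
case: (rep_prop r); case: (svalP r) => psi psi0 E; rewrite E.
move=> [a _ <-] ha0 Srep y [c _ <-].
have a0 : a != 0 by apply: contraNneq ha0 => ->; rewrite scale0r.
have -> : c *: psi = (c / a) *: (a *: psi) by rewrite scalerA divfK.
exact: scl_closed.
Qed.

Lemma ebar1P (r : PH H) (S : LH H) : ebar r S = 1 <-> sval r `<=` sval S.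
Proof.
rewrite /ebar ebar_core; [exact: rep_sub (svalP S) r|exact: svalP|].
by case: (rep_prop r).
Qed.

End Aux.

Theorem lemma3p8 (R : realType) (H K : HilbertSpace R)
  (fs : PH H -> PH K) (fp : LH K -> LH H) :
  chu_morphism fs fp ->
  forall (S : LH H) (T : LH K),
    fto fs S `<=` sval T <-> sval S `<=` sval (fp T).
Proof.
move=> chu S T; split.
- move=> h psi Spsi.
  have [->|psi0] := eqVneq psi 0%R; first by case: (svalP (fp T)).
  have rP : exists2 p : H, p != 0%R & ray psi = ray p by exists psi.
  pose r : PH H := exist _ (ray psi) rP.
  have : sval r `<=` sval (fp T).
    apply/ebar1P; rewrite chu; apply/ebar1P => x fx; apply: h.
    move=> T' _ hall; apply: (hall (sval (fs r))) => //.
    by exists r, psi.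
  by apply; exists 1%R => //; rewrite scale1r.
- move=> h x; apply => //; first exact: svalP.
  move=> A [r [psi [Spsi psi0 Er ->]]].
  apply/ebar1P; rewrite -chu; apply/ebar1P; rewrite Er => y [c _ <-].
  by apply: h; apply: scl_closed => //; exact: svalP.
Qed.
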